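(* Let $n,k,\ell_{max}$ be positive integers, $F\subseteq\{1,\dots,n\}$ with $|F|=k$, $\varepsilon\in(0,1]$, $b$ a positive integer, and $\eta=\frac1{4k}$. Let $\sigma=\frac{4}{3\eta k}\,\ell_{max}\log_2 k+\frac{3}{\eta k\varepsilon}+\frac{b\log_2 k}{\log_2(16/15)}$. Let $x(t)\in\{0,1\}^n$ satisfy, for every $t\ge0$, $x_i(t)=1$ for $i\in F$ and $x_i(t)=0$ for $i\notin F$. Let $w_i(0)=\frac{1}{k^{\ell_{max}}}$ for all $i$, and for $t\ge1$ let $w(t)=w(t-1)+\eta\,z(t-1)\big(x(t-1)-z(t-1)w(t-1)\big)$ with $z(t-1)=w(t-1)\cdot x(t-1)$. Then for every $t\ge\sigma$: (1) for every $i\in F$, $w_i(t)\in\left[\frac{1}{(1+\varepsilon)\sqrt k},\frac1{\sqrt k}\right]$; (2) for every $i\notin F$, $w_i(t)\le\frac{1}{k^{\ell_{max}+b}}$.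
   Context: This describes a single neuron engaged in learning (Oja's rule) at every step, always receiving the same input vector in which exactly the coordinates in $F$ are $1$. In particular $\sigma=O\!\left(\frac1{\eta k}\left(\ell_{max}\log k+\frac1\varepsilon\right)+b\log k\right)$. *)

(* Defs.v *)
(* concrete reals R. Coordinates are indexed 1..n. *)
From Stdlib Require Import Reals List Arith.
Import ListNotations.
Open Scope R_scope.

Definition log2 (x : R) : R := ln x / ln 2.

Definition dot (n : nat) (w x : nat -> R) : R :=
  fold_right Rplus 0 (map (fun i => w i * x i) (seq 1 n)).

Fixpoint oja_w (n : nat) (eta : R) (w0 : nat -> R) (x : nat -> nat -> R)
  (t : nat) : nat -> R :=
  match t with
  | O => w0
  | S t' =>
      let w := oja_w n eta w0 x t' in
      let z := dot n w (x t') in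
      fun i => w i + eta * z * (x t' i - z * w i)
  end.

(* Main.v *)
Require Import Defs.
From Stdlib Require Import Reals List Arith Lra Lia ZArith.
Open Scope R_scope.

Lemma ln_ge_from (x y : R) : 0 < x -> 0 < y -> ln y <= ln x -> y <= x.
Proof.
  intros Hx Hy H. destruct (Rle_or_lt y x) as [|Hlt]; auto.
  pose proof (ln_increasing x y Hx Hlt). lra.
Qed.

Lemma ln_nonneg (x : R) : 1 <= x -> 0 <= ln x.
Proof.
  intros H. destruct (Req_dec x 1) as [->|Hn]. rewrite ln_1; lra.
  rewrite <- ln_1. left. apply ln_increasing; lra.
Qed.

Lemma sum_filter (F l : list nat) (u : R) (g : nat -> R) :
  (forall i, In i l -> g i = if in_dec Nat.eq_dec i F then u else 0) ->
  fold_right Rplus 0 (map g l) =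
  INR (length (filter (fun i => if in_dec Nat.eq_dec i F then true else false) l)) * u.
Proof.
  induction l as [|a l IH]; intros H; simpl. lra.
  rewrite IH by (intros; apply H; simpl; auto).
  rewrite (H a) by (simpl; auto).
  destruct (in_dec Nat.eq_dec a F); simpl length; try rewrite S_INR; lra.
Qed.

Lemma count_F (n : nat) (F : list nat) :
  NoDup F -> (forall i, In i F -> (1 <= i <= n)%nat) ->
  length (filter (fun i => if in_dec Nat.eq_dec i F then true else false) (seq 1 n)) = length F.
Proof.
  intros HN HF. apply Nat.le_antisymm; apply NoDup_incl_length.
  - apply NoDup_filter, seq_NoDup.
  - intros i Hi. apply filter_In in Hi as [_ Hi].
    destruct (in_dec Nat.eq_dec i F); congruence.
  - exact HN.
  - intros i Hi. apply filter_In. split.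
    + apply in_seq. specialize (HF i Hi). lia.
    + destruct (in_dec Nat.eq_dec i F); tauto.
Qed.

Fixpoint uu (K eta c : R) (t : nat) : R :=
  match t with O => c | S t => let a := uu K eta c t in a + eta * (K * a) * (1 - K * a * a) end.
Fixpoint vv (K eta c : R) (t : nat) : R :=
  match t with O => c | S t => let a := uu K eta c t in vv K eta c t + eta * (K * a) * (0 - K * a * vv K eta c t) end.

Lemma oja_eq (n : nat) (F : list nat) (x : nat -> nat -> R) (eta c : R) :
  NoDup F -> (forall i, In i F -> (1 <= i <= n)%nat) ->
  (forall t i, (1 <= i <= n)%nat -> (In i F -> x t i = 1) /\ (~ In i F -> x t i = 0)) ->
  forall t, (forall i, In i F -> oja_w n eta (fun _ => c) x t i = uu (INR (length F)) eta c t) /\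
            (forall i, (1 <= i <= n)%nat -> ~ In i F -> oja_w n eta (fun _ => c) x t i = vv (INR (length F)) eta c t).
Proof.
  intros HN HF Hx t. induction t as [|t [IH1 IH2]]; simpl. split; auto.
  assert (Hd : dot n (oja_w n eta (fun _ => c) x t) (x t) = INR (length F) * uu (INR (length F)) eta c t).
  { unfold dot. rewrite (sum_filter F _ (uu (INR (length F)) eta c t)).
    - rewrite count_F; auto.
    - intros i Hi. apply in_seq in Hi. destruct (Hx t i ltac:(lia)) as [H1 H0].
      destruct (in_dec Nat.eq_dec i F) as [Hi'|Hi'].
      + rewrite H1, IH1 by auto. ring.
      + rewrite H0 by auto. ring. }
  rewrite Hd. split.
  - intros i Hi. destruct (Hx t i (HF i Hi)) as [H1 _]. rewrite H1, IH1 by auto. ring.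
  - intros i Hi Hni. destruct (Hx t i Hi) as [_ H0]. rewrite H0, IH2 by auto. ring.
Qed.
Section S.
Variable s v : nat -> R.
Hypothesis Hs : forall t, s (S t) = s t + s t * (1 - s t * s t) / 4.
Hypothesis Hv : forall t, v (S t) = v t * (1 - s t * s t / 4).
Hypothesis Hs0 : 0 < s 0 <= 1.
Hypothesis Hv0 : 0 <= v 0.

Lemma s_bound : forall t, 0 < s t <= 1.
Proof.
  induction t as [|t IH]; auto. rewrite Hs. destruct IH as [H1 H2].
  split. nra.
  assert (0 <= (1 - s t) * (4 - s t - s t * s t)) by (apply Rmult_le_pos; nra). nra.
Qed.

Lemma s_mono : forall t, s t <= s (S t).
Proof. intros t. rewrite Hs. destruct (s_bound t). nra. Qed.

Lemma s_mono_add : forall m j, s m <= s (m + j).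
Proof.
  intros m j. induction j. rewrite Nat.add_0_r; lra.
  rewrite Nat.add_succ_r. pose proof (s_mono (m + j)). lra.
Qed.

Lemma s_phase1 : forall t, 1/2 <= s t \/ s 0 * (19/16)^t <= s t.
Proof.
  induction t as [|t IH]. right; simpl; lra.
  destruct (Rle_or_lt (1/2) (s t)) as [H|H].
  - left. pose proof (s_mono t). lra.
  - destruct IH as [IH|IH]. lra. right. rewrite Hs. simpl.
    destruct (s_bound t). nra.
Qed.

Lemma s_phase2 : forall m j, 1/2 <= s m ->
  1 - s (m + j) * s (m + j) <= (7/8)^j * (1 - s m * s m).
Proof.
  intros m j Hm. induction j. rewrite Nat.add_0_r; simpl; lra.
  rewrite Nat.add_succ_r, Hs. simpl.
  pose proof (s_mono_add m j). destruct (s_bound (m + j)).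
  set (a := s (m+j)) in *.
  assert (Hq : (1 - a*a) * (a*a*a*a - 9*(a*a) + 2) <= 0).
  { assert (0 <= 1 - a*a) by nra. assert (1/4 <= a*a) by nra. assert (a*a <= 1) by nra. assert ((a*a - 1/4)*(a*a-1) <= 0) by nra. assert (a*a*a*a - 9*(a*a) + 2 <= 0) by nra. nra. }
  assert (1 - (a + a * (1 - a*a)/4) * (a + a * (1 - a*a)/4) <= 7/8 * (1 - a*a)) by nra.
  assert (0 <= 7/8) by lra. nra.
Qed.

Lemma v_bound : forall t, 0 <= v t /\ v t <= v 0.
Proof.
  induction t as [|t [IH1 IH2]]. lra. rewrite Hv. destruct (s_bound t). assert (0 <= s t * s t <= 1) by (split; nra). split; nra.
Qed.

Lemma v_phase : forall m j, 1/2 <= s m -> v (m + j) <= (15/16)^j * v m.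
Proof.
  intros m j Hm. induction j. rewrite Nat.add_0_r; simpl; lra.
  rewrite Nat.add_succ_r, Hv. simpl.
  pose proof (s_mono_add m j). destruct (s_bound (m + j)). destruct (v_bound (m+j)).
  assert (1/4 <= s (m + j) * s (m + j)) by nra.
  assert (v (m + j) * (1 - s (m + j) * s (m + j) / 4) <= 15/16 * v (m+j)) by nra.
  assert (0 <= (15/16)^j) by (apply pow_le; lra).
  nra.
Qed.
End S.

Lemma bern : forall j, (7/8)^j * (1 + INR j / 7) <= 1.
Proof.
  induction j. simpl; lra. rewrite S_INR. simpl.
  assert (0 <= (7/8)^j) by (apply pow_le; lra). pose proof (pos_INR j). nra.
Qed.

Theorem mainTheorem10 :
  forall (n k lmax b : nat) (F : list nat) (eps : R) (x : nat -> nat -> R),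
    (0 < n)%nat -> (0 < k)%nat -> (0 < lmax)%nat -> (0 < b)%nat ->
    NoDup F -> (forall i, In i F -> (1 <= i <= n)%nat) -> length F = k ->
    0 < eps <= 1 ->
    (forall t i, (1 <= i <= n)%nat ->
        (In i F -> x t i = 1) /\ (~ In i F -> x t i = 0)) ->
    let eta := 1 / (4 * INR k) in
    let sigma := 4 / (3 * eta * INR k) * INR lmax * log2 (INR k)
                 + 3 / (eta * INR k * eps)
                 + INR b * log2 (INR k) / log2 (16 / 15) in
    let w := oja_w n eta (fun _ => 1 / INR k ^ lmax) x in
    forall t : nat, sigma <= INR t ->
      (forall i, In i F ->
         1 / ((1 + eps) * sqrt (INR k)) <= w t i <= 1 / sqrt (INR k)) /\
      (forall i, (1 <= i <= n)%nat -> ~ In i F ->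
         w t i <= 1 / INR k ^ (lmax + b)).
Proof.
  intros n k lmax b F eps x Hn Hk Hl Hb HN HF HL He Hx eta sigma w t Ht.
  pose proof (oja_eq n F x eta (1 / INR k ^ lmax) HN HF Hx t) as [E1 E2].
  rewrite HL in E1, E2. subst w.
  set (K := INR k) in *. set (c := 1 / K ^ lmax) in *.
  assert (HK1 : 1 <= K) by (unfold K; apply (le_INR 1); lia).
  set (sk := sqrt K).
  assert (Hsk2 : sk * sk = K) by (apply sqrt_sqrt; lra).
  assert (Hsk0 : 0 < sk) by (apply sqrt_lt_R0; lra).
  assert (Hsk1 : 1 <= sk) by nra.
  assert (Heta : eta = 1 / (4 * (sk * sk))) by (unfold eta; rewrite Hsk2; reflexivity).
  set (s := fun t => sk * uu K eta c t).
  set (v := fun t => vv K eta c t).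
  assert (Hs : forall t, s (S t) = s t + s t * (1 - s t * s t) / 4).
  { intros t0. unfold s. simpl uu. rewrite Heta. rewrite <- Hsk2. field. lra. }
  assert (Hv : forall t, v (S t) = v t * (1 - s t * s t / 4)).
  { intros t0. unfold s, v. simpl vv. rewrite Heta. rewrite <- Hsk2. field. lra. }
  assert (HKl : 0 < K ^ lmax) by (apply pow_lt; lra).
  assert (HKl1 : K <= K ^ lmax).
  { rewrite <- (pow_1 K) at 1. apply Rle_pow; [lra|lia]. }
  assert (Hc0 : 0 < c) by (unfold c; apply Rdiv_lt_0_compat; lra).
  assert (Hs0 : 0 < s O <= 1).
  { unfold s; simpl. unfold c. split. apply Rmult_lt_0_compat; auto; apply Rdiv_lt_0_compat; lra.
    apply (Rmult_le_reg_r (K ^ lmax)); auto. unfold Rdiv. rewrite Rmult_1_l, Rmult_assoc, Rinv_l by lra. nra. }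
  assert (Hv0 : 0 <= v O) by (unfold v; simpl; lra).

  pose proof (ln_nonneg K HK1) as HLK.
  assert (HL2 : 0 < ln 2) by (rewrite <- ln_1; apply ln_increasing; lra).
  assert (HL16 : 0 < ln (16/15)) by (rewrite <- ln_1; apply ln_increasing; lra).
  assert (Hr : 3 * ln 2 <= 16 * ln (19/16)).
  { assert (E8 : ln 8 = 3 * ln 2).
    { replace 8 with (2 ^ 3) by (simpl; lra). rewrite ln_pow by lra. simpl; lra. }
    rewrite <- E8. replace (16 * ln (19/16)) with (ln ((19/16)^16)) by (rewrite ln_pow by lra; simpl INR; lra). left. apply ln_increasing. lra. simpl; lra. }
  set (A := 16/3 * INR lmax * (ln K / ln 2)).
  set (C := INR b * (ln K / ln (16/15))).
  assert (HA0 : 0 <= A).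
  { unfold A. apply Rmult_le_pos. pose proof (pos_INR lmax); lra.
    unfold Rdiv; apply Rmult_le_pos; [lra| left; apply Rinv_0_lt_compat; lra]. }
  assert (HC0 : 0 <= C).
  { unfold C. apply Rmult_le_pos. apply pos_INR. unfold Rdiv; apply Rmult_le_pos; [lra| left; apply Rinv_0_lt_compat; lra]. }
  assert (Hsig : sigma = A + 12 / eps + C).
  { unfold sigma, A, C, eta, log2. field. repeat split; try lra. }
  destruct (archimed A) as [Hup1 Hup2].
  set (m1 := Z.to_nat (up A)).
  assert (Hm1 : INR m1 = IZR (up A)).
  { unfold m1. rewrite INR_IZR_INZ, Z2Nat.id; auto. apply le_IZR. lra. }
  assert (H12 : 12 <= 12 / eps).
  { apply (Rmult_le_reg_r eps); try lra. unfold Rdiv. rewrite Rmult_assoc, Rinv_l by lra. nra. }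
  assert (Hm1t : (m1 <= t)%nat) by (apply INR_le; lra).
  set (j := (t - m1)%nat).
  assert (Htj : t = (m1 + j)%nat) by (unfold j; lia).
  assert (Hj : INR j = INR t - INR m1) by (unfold j; apply minus_INR; auto).
  assert (Hph1 : 1/2 <= s m1).
  { destruct (s_phase1 s Hs Hs0 m1) as [H|H]; auto.
    assert (Hpow : K ^ lmax <= (19/16) ^ m1).
    { apply ln_ge_from. apply pow_lt; lra. auto.
      rewrite !ln_pow by lra.
      assert (A * ln 2 = 16/3 * INR lmax * ln K) by (unfold A; field; lra).
      assert (0 <= INR lmax * ln K) by (apply Rmult_le_pos; auto; apply pos_INR).
      assert (HB : INR lmax * ln K * (3 * ln 2) <= INR lmax * ln K * (16 * ln (19/16)))
        by (apply Rmult_le_compat_l; auto).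
      assert (HLr : 0 < ln (19/16)) by (rewrite <- ln_1; apply ln_increasing; lra).
      assert (A * ln (19/16) <= INR m1 * ln (19/16)) by (apply Rmult_le_compat_r; lra).
      apply (Rmult_le_reg_r (ln 2)); auto. nra. }
    assert (1 <= s O * (19/16) ^ m1).
    { unfold s; simpl; unfold c.
      apply (Rle_trans _ (sk * (1 / K ^ lmax) * K ^ lmax)).
      unfold Rdiv; rewrite Rmult_1_l, Rmult_assoc, Rinv_l by lra; lra.
      apply Rmult_le_compat_l; auto. left; apply Rmult_lt_0_compat; [lra| apply Rdiv_lt_0_compat; lra]. }
    lra. }
  split.
  - intros i Hi. rewrite E1 by auto.
    assert (Hu : uu K eta c t = s t / sk) by (unfold s; field; lra).
    rewrite Hu. destruct (s_bound s Hs Hs0 t) as [Hst0 Hst1].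
    split.
    + assert (Hp := bern j). set (p := (7/8)^j) in *.
      assert (Hp0 : 0 <= p) by (apply pow_le; lra).
      assert (Hje : 7 / eps <= INR j).
      { assert (7 / eps + 1 <= 12 / eps).
        { apply (Rmult_le_reg_r eps); try lra. unfold Rdiv. rewrite Rmult_plus_distr_r, !Rmult_assoc, Rinv_l by lra. nra. }
        lra. }
      assert (Hpe : p * (1 + 1/eps) <= 1).
      { assert (1/eps <= INR j / 7).
        { apply (Rmult_le_reg_r (7*eps)); try lra. unfold Rdiv.
          replace (1 * / eps * (7 * eps)) with 7 by (field; lra).
          replace (INR j * / 7 * (7 * eps)) with (INR j * eps) by field.
          apply (Rmult_le_compat_r eps) in Hje; try lra.
          unfold Rdiv in Hje. rewrite Rmult_assoc, Rinv_l in Hje by lra. lra. }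
        nra. }
      assert (He2 := s_phase2 s Hs Hs0 m1 j Hph1). rewrite <- Htj in He2. fold p in He2.
      destruct (s_bound s Hs Hs0 m1).
      assert (1/4 <= s m1 * s m1) by nra. assert (p * (1 - s m1 * s m1) <= p * (3/4)) by (apply Rmult_le_compat_l; lra). assert (Hsq : 1 - s t * s t <= 3/4 * p) by lra.
      assert (Hpe' : p * (1 + eps) <= eps).
      { replace (p * (1 + eps)) with (p * (1 + 1/eps) * eps) by (field; lra). nra. }
      assert (Hy : 1 <= s t * (1 + eps)).
      { assert (1 <= (s t * (1 + eps)) * (s t * (1 + eps))) by nra. nra. }
      apply (Rmult_le_reg_r ((1 + eps) * sk)). nra.
      unfold Rdiv. rewrite Rmult_1_l, Rinv_l by nra.
      replace (s t * / sk * ((1 + eps) * sk)) with (s t * (1 + eps)) by (field; lra). lra.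
    + unfold Rdiv. apply Rmult_le_compat_r. left; apply Rinv_0_lt_compat; lra. lra.
  - intros i Hi Hni. rewrite E2 by auto. fold (v t).
    assert (Hvp := v_phase s v Hs Hv Hs0 Hv0 m1 j Hph1). rewrite <- Htj in Hvp.
    destruct (v_bound s v Hs Hv Hs0 Hv0 m1) as [_ Hvm].
    assert (Hvc : v O = c) by reflexivity.
    assert (HKb : 0 < K ^ b) by (apply pow_lt; lra).
    assert (Hpow : K ^ b <= (16/15) ^ j).
    { apply ln_ge_from. apply pow_lt; lra. auto.
      rewrite !ln_pow by lra.
      assert (C <= INR j) by lra.
      assert (C * ln (16/15) = INR b * ln K) by (unfold C; field; lra).
      assert (C * ln (16/15) <= INR j * ln (16/15)) by (apply Rmult_le_compat_r; lra).
      lra. }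
    assert (Hq : (15/16)^j * (16/15)^j = 1).
    { rewrite <- Rpow_mult_distr. replace (15/16*(16/15)) with 1 by field. apply pow1. }
    assert (Hq0 : 0 <= (15/16)^j) by (apply pow_le; lra).
    assert (Hq1 : (15/16)^j * K^b <= 1) by nra.
    rewrite pow_add.
    apply (Rle_trans _ ((15/16)^j * c)). nra.
    unfold c. apply (Rmult_le_reg_r (K ^ lmax * K ^ b)). nra.
    replace ((15/16)^j * (1 / K ^ lmax) * (K ^ lmax * K ^ b)) with ((15/16)^j * K^b) by (field; lra).
    replace (1 / (K ^ lmax * K ^ b) * (K ^ lmax * K ^ b)) with 1 by (field; lra). lra.
Qed.
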